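(* Assume $|J|=1$, the travel times $\tau$ have a convex potential $\Phi$, and all externality factors $g_{i,p}$ are constant. Then for every $0\le\lambda_1<\lambda_2$ and all $x_1\in\mathrm{WE}(\lambda_1)$, $x_2\in\mathrm{WE}(\lambda_2)$, it holds that $G(x_1)\ge G(x_2)$ and $\Phi(x_1)\le\Phi(x_2)$.
   Context: Let $G=(V,E)$ be a directed graph and $I$ a finite set of commodities; commodity $i$ has source $s_i$, sink $t_i$, demand $d_i>0$; $\mathcal P_i$ is its set of simple $s_i$–$t_i$ paths, $\mathcal P=\{(i,p)\}$. A flow $x\in\mathbb{R}^{\mathcal P}_{\ge0}$ is feasible if $\sum_{p\in\mathcal P_i}x_{i,p}=d_i$ for all $i$; $\mathcal F$ is the set of feasible flows. There is one externality class with constant factors $g_{i,p}\ge0$, $G(x)=\sum_{(i,p)}g_{i,p}x_{i,p}$. Travel times $\tau_{i,p}:\mathcal F\to\mathbb{R}$ have a potential: a differentiable $\Phi:\mathbb{R}^{\mathcal P}\to\mathbb{R}$ with $\tau_{i,p}(x)=\partial\Phi/\partial x_{i,p}(x)$ for $x\in\mathcal F$, assumed convex. For $\lambda\ge0$, $c^\lambda_{i,p}(x)=\tau_{i,p}(x)+\lambda g_{i,p}$, and $x\in\mathrm{WE}(\lambda)$ means $x\in\mathcal F$ and $x_{i,p}>0$ implies $c^\lambda_{i,p}(x)\le c^\lambda_{i,q}(x)$ for all $q\in\mathcal P_i$. *)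

(* Defs.v *)
From HB Require Import structures.
From mathcomp Require Import all_boot all_order all_algebra.
From mathcomp Require Import all_classical all_reals all_analysis.
Import Order.TTheory GRing.Theory Num.Theory.
Import numFieldNormedType.Exports.
Set Implicit Arguments.
Unset Strict Implicit.
Unset Printing Implicit Defensive.
Local Open Scope ring_scope.

Section Network.
(* directed graph (V, E), commodities I with sources s and sinks t *)
Variables (V : finType) (E : rel V) (I : finType) (s t : I -> V).

Definition is_simple_path (i : I) (p : seq V) : bool :=
  if p is v :: q then [&& v == s i, path E v q, last v q == t i & uniq p]
  else false.

Definition uniq_seqs : seq (seq V) :=
  flatten [seq permutations (enum A) | A : {set V} <- enum {: {set V}}].

Definition path_pairs : seq (I * seq V) :=
  [seq ip <- [seq (i, p) | i <- enum I, p <- uniq_seqs]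
     | is_simple_path ip.1 ip.2].

Definition Pidx : finType := seq_sub path_pairs.

Definition comm (k : Pidx) : I := (val k).1.
Definition route (k : Pidx) : seq V := (val k).2.

Definition npaths : nat := #|{: Pidx}|.

Variable R : realType.

(* R^P, realised as row vectors indexed by an enumeration of P *)
Definition flowT := 'rV[R]_npaths.
Definition xval (x : flowT) (k : Pidx) : R := x ord0 (enum_rank k).
Definition unitv (k : Pidx) : flowT := delta_mx ord0 (enum_rank k).

Definition feasible (d : I -> R) (x : flowT) : Prop :=
  (forall k, 0 <= xval x k) /\
  (forall i : I, \sum_(k : Pidx | comm k == i) xval x k = d i).

Definition Gext (g : Pidx -> R) (x : flowT) : R :=
  \sum_(k : Pidx) g k * xval x k.

Definition cost (tau : Pidx -> flowT -> R) (g : Pidx -> R) (lam : R)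
  (k : Pidx) (x : flowT) : R := tau k x + lam * g k.

Definition WE (d : I -> R) (tau : Pidx -> flowT -> R) (g : Pidx -> R)
  (lam : R) (x : flowT) : Prop :=
  feasible d x /\
  forall k q : Pidx, comm q = comm k -> 0 < xval x k ->
    cost tau g lam k x <= cost tau g lam q x.

Definition is_potential (d : I -> R) (tau : Pidx -> flowT -> R)
  (Phi : flowT -> R) : Prop :=
  (forall x : flowT, differentiable Phi x) /\
  (forall x : flowT, feasible d x -> forall k, derive Phi x (unitv k) = tau k x).

Definition convex_fun (Phi : flowT -> R) : Prop :=
  forall (x y : flowT) (a : R), 0 <= a <= 1 ->
    Phi (a *: x + (1 - a) *: y) <= a * Phi x + (1 - a) * Phi y.

End Network.

(* Main.v *)
Require Import Defs.
From HB Require Import structures.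
From mathcomp Require Import all_boot all_order all_algebra.
From mathcomp Require Import all_classical all_reals all_analysis.
From mathcomp Require Import ring lra.
Import numFieldNormedType.Exports.
Local Open Scope classical_set_scope.
Import Order.TTheory GRing.Theory Num.Theory.
Local Open Scope ring_scope.
Lemma grad_ineq (R : realType) (V : normedModType R) (Phi : V -> R)
  (Hconv : forall (x y : V) (a : R), 0 <= a <= 1 ->
    Phi (a *: x + (1 - a) *: y) <= a * Phi x + (1 - a) * Phi y)
  (x y : V) : differentiable Phi x ->
  Phi x + derive Phi x (y - x) <= Phi y.
Proof.
move=> dPhi.
have /cvg_ex[l Hl] := @diff_derivable _ _ _ _ _ (y - x) dPhi.
have -> : derive Phi x (y - x) = l by apply: cvg_lim.
rewrite addrC -lerBrDr.
apply: (cvgr_to_le (cvg_dnbhs_at_right Hl)).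
near=> h.
have h0 : 0 < h by near: h; exact: nbhs_right_gt.
have h1 : h < 1 by near: h; exact: nbhs_right_lt.
rewrite /= /shift.
have -> : h *: (y - x) + x = h *: y + (1 - h) *: x.
  by rewrite scalerBr scalerBl scale1r addrAC addrA.
have := Hconv y x h.
rewrite (ltW h0) (ltW h1) => /(_ isT) Hc.
rewrite -[h^-1 *: _]/(h^-1 * _).
rewrite ler_pdivrMl //.
lra.
Unshelve. all: by end_near.
Qed.

Lemma vi_ineq (V : finType) (E : rel V) (I : finType) (s t : I -> V)
  (R : realType) (d : I -> R) (d_pos : forall i, 0 < d i)
  (g : Pidx E s t -> R) (tau : Pidx E s t -> flowT E s t R -> R)
  (lam : R) (x y : flowT E s t R) :
  WE d tau g lam x -> feasible d y ->
  \sum_k cost tau g lam k x * xval x k <= \sum_k cost tau g lam k x * xval y k.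
Proof.
move=> [[Hx0 Hx] Hwe] [Hy0 Hy].
set c := fun k => cost tau g lam k x.
rewrite (partition_big (@comm _ _ _ s t) xpredT) //.
rewrite [X in _ <= X](partition_big (@comm _ _ _ s t) xpredT) //=.
apply: ler_sum => i _.
rewrite -(ler_pM2l (d_pos i)).
have -> : d i * (\sum_(k | comm k == i) c k * xval x k) =
   \sum_(k | comm k == i) \sum_(q | comm q == i) c k * xval x k * xval y q.
  rewrite -Hy big_distrl /=.
  under eq_bigr do rewrite big_distrr /=.
  rewrite exchange_big /=; apply: eq_bigr => k _; apply: eq_bigr => q _; ring.
have -> : d i * (\sum_(q | comm q == i) c q * xval y q) =
   \sum_(k | comm k == i) \sum_(q | comm q == i) c q * xval y q * xval x k.
  rewrite -Hx big_distrl /=; apply: eq_bigr => k _.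
  rewrite big_distrr /=; apply: eq_bigr => q _; ring.
apply: ler_sum => k /eqP hk; apply: ler_sum => q /eqP hq.
have yq := Hy0 q.
have [xk0|xkp] := eqVneq (xval x k) 0.
  by rewrite xk0 !(mulr0, mul0r).
have xkp' : 0 < xval x k by rewrite lt_def xkp Hx0.
have := Hwe k q (etrans hq (esym hk)) xkp'.
rewrite -/(c k) -/(c q) => hc.
have hxy := mulr_ge0 (ltW xkp') yq.
nra.
Qed.

Lemma deriv_decomp (V : finType) (E : rel V) (I : finType) (s t : I -> V)
  (R : realType) (d : I -> R)
  (tau : Pidx E s t -> flowT E s t R -> R) (Phi : flowT E s t R -> R)
  (Hpot : is_potential d tau Phi) (x w : flowT E s t R) :
  feasible d x ->
  derive Phi x w = \sum_k xval w k * tau k x.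
Proof.
move=> fx; case: Hpot => Hd Ht.
rewrite deriveE //.
rewrite {1}(row_sum_delta w) linear_sum /=.
rewrite (reindex (@enum_rank (Pidx E s t))) /=; last first.
  by apply: onW_bij; exact: enum_rank_bij.
apply: eq_bigr => k _.
by rewrite linearZ /= -deriveE // Ht.
Qed.

Lemma vi_expand (V : finType) (E : rel V) (I : finType) (s t : I -> V)
  (R : realType) (d : I -> R)
  (g : Pidx E s t -> R) (tau : Pidx E s t -> flowT E s t R -> R)
  (Phi : flowT E s t R -> R)
  (Hpot : is_potential d tau Phi) (lam : R) (x y : flowT E s t R) :
  feasible d x ->
  \sum_k cost tau g lam k x * xval y k - \sum_k cost tau g lam k x * xval x k
  = derive Phi x (y - x) + lam * (Gext g y - Gext g x).
Proof.
move=> fx; rewrite (@deriv_decomp _ _ _ _ _ _ _ _ _ Hpot _ _ fx) /Gext -!sumrB mulr_sumr -big_split /=.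
apply: eq_bigr => k _; rewrite /cost /xval !mxE; ring.
Qed.

Theorem lemma4p6 (V : finType) (E : rel V) (I : finType) (s t : I -> V)
  (R : realType) (d : I -> R) (d_pos : forall i, 0 < d i)
  (g : Pidx E s t -> R) (g_ge0 : forall k, 0 <= g k)
  (tau : Pidx E s t -> flowT E s t R -> R) (Phi : flowT E s t R -> R)
  (Hpot : is_potential d tau Phi) (Hconv : convex_fun Phi)
  (lam1 lam2 : R) (Hlam1 : 0 <= lam1) (Hlam12 : lam1 < lam2)
  (x1 x2 : flowT E s t R) :
  WE d tau g lam1 x1 -> WE d tau g lam2 x2 ->
  Gext g x2 <= Gext g x1 /\ Phi x1 <= Phi x2.
Proof.
move=> W1 W2.
have f1 := W1.1; have f2 := W2.1.
have V1 := @vi_ineq _ _ _ _ _ _ _ d_pos _ _ _ _ _ W1 f2.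
have V2 := @vi_ineq _ _ _ _ _ _ _ d_pos _ _ _ _ _ W2 f1.
have E1 := @vi_expand _ _ _ _ _ _ _ g _ _ Hpot lam1 x1 x2 f1.
have E2 := @vi_expand _ _ _ _ _ _ _ g _ _ Hpot lam2 x2 x1 f2.
have G1 := @grad_ineq _ _ Phi Hconv x1 x2 (Hpot.1 x1).
have G2 := @grad_ineq _ _ Phi Hconv x2 x1 (Hpot.1 x2).
move: V1 V2 E1 E2 G1 G2.
set S1 := \sum_k _ * xval x1 k.
set S2 := \sum_k _ * xval x2 k.
set S3 := \sum_k _ * xval x2 k.
set S4 := \sum_k _ * xval x1 k.
set A := derive Phi x1 _; set B := derive Phi x2 _.
move=> V1 V2 E1 E2 G1 G2.
have HD : Gext g x2 <= Gext g x1 by nra.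
split => //; nra.
Qed.
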